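(* Let $n\geq 2$ and let $(A,\cdot,[\cdot,\ldots,\cdot])$ be a transposed Poisson $n$-Lie algebra. Then $(A,\cdot,[\cdot,\ldots,\cdot])$ is simple if and only if the $n$-Lie algebra $(A,[\cdot,\ldots,\cdot])$ is simple.
   Context: An $n$-Lie algebra is a vector space $L$ with an $n$-linear skew-symmetric bracket satisfying $[[x_1,\ldots,x_n],y_2,\ldots,y_n]=\sum_{i=1}^n[x_1,\ldots,x_{i-1},[x_i,y_2,\ldots,y_n],x_{i+1},\ldots,x_n]$; an ideal is a subspace $I$ with $[I,A,\ldots,A]\subseteq I$, and it is simple if $[A,\ldots,A]\neq 0$ and its only ideals are $0$ and $A$. A transposed Poisson $n$-Lie algebra (over $\mathbb{C}$) is a triple $(A,\cdot,[\cdot,\ldots,\cdot])$ where $(A,\cdot)$ is commutative associative, $(A,[\cdot,\ldots,\cdot])$ is an $n$-Lie algebra, and $n\,h\,[a_1,\ldots,a_n]=\sum_{i=1}^n[a_1,\ldots,h a_i,\ldots,a_n]$ for all $h,a_i\in A$. An ideal of it is a subspace $J$ with $A\cdot J\subseteq J$ and $[J,A,\ldots,A]\subseteq J$; it is simple if $[A,\ldots,A]\neq 0$ and its only ideals are $0$ and $A$. *)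

(* Defs.v *)
From HB Require Import structures.
From mathcomp Require Import all_boot all_order all_algebra.
From mathcomp Require Import reals complex.
Set Implicit Arguments. Unset Strict Implicit. Unset Printing Implicit Defensive.
Import Order.TTheory GRing.Theory Num.Theory.
Local Open Scope ring_scope.

Section TPnLie.
Variables (K : fieldType) (V : lmodType K) (n : nat).

Definition upd (x : {ffun 'I_n -> V}) (i : 'I_n) (v : V) : {ffun 'I_n -> V} :=
  [ffun j => if j == i then v else x j].

Definition swp (x : {ffun 'I_n -> V}) (i j : 'I_n) : {ffun 'I_n -> V} :=
  [ffun k => if k == i then x j else if k == j then x i else x k].

Definition multilinear (br : {ffun 'I_n -> V} -> V) : Prop :=
  forall (x : {ffun 'I_n -> V}) (i : 'I_n) (a : K) (u v : V),
    br (upd x i (a *: u + v)) = a *: br (upd x i u) + br (upd x i v).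

Definition skew_symmetric (br : {ffun 'I_n -> V} -> V) : Prop :=
  forall (x : {ffun 'I_n -> V}) (i j : 'I_n), i != j -> br (swp x i j) = - br x.

(* Filippov identity: [[x_1..x_n], y_2..y_n] = sum_i [x_1..[x_i,y_2..y_n]..x_n];
   the first slot of y is the index k with val k = 0 (its content is ignored). *)
Definition filippov (br : {ffun 'I_n -> V} -> V) : Prop :=
  forall (x y : {ffun 'I_n -> V}) (k : 'I_n), val k = 0%N ->
    br (upd y k (br x)) = \sum_(i < n) br (upd x i (br (upd y k (x i)))).

Definition is_nLie (br : {ffun 'I_n -> V} -> V) : Prop :=
  [/\ multilinear br, skew_symmetric br & filippov br].

Definition is_comm_assoc (mul : V -> V -> V) : Prop :=
  [/\ forall (a : K) (u v w : V), mul (a *: u + v) w = a *: mul u w + mul v w,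
      forall u v, mul u v = mul v u &
      forall u v w, mul u (mul v w) = mul (mul u v) w].

Definition tp_identity (mul : V -> V -> V) (br : {ffun 'I_n -> V} -> V) : Prop :=
  forall (h : V) (a : {ffun 'I_n -> V}),
    n%:R *: mul h (br a) = \sum_(i < n) br (upd a i (mul h (a i))).

Definition is_TP_nLie (mul : V -> V -> V) (br : {ffun 'I_n -> V} -> V) : Prop :=
  [/\ is_comm_assoc mul, is_nLie br & tp_identity mul br].

Definition subspace (I : V -> Prop) : Prop :=
  [/\ I 0, forall u v, I u -> I v -> I (u + v) & forall (a : K) u, I u -> I (a *: u)].

Definition nLie_ideal (br : {ffun 'I_n -> V} -> V) (I : V -> Prop) : Prop :=
  subspace I /\
  forall (x : {ffun 'I_n -> V}) (k : 'I_n), val k = 0%N -> I (x k) -> I (br x).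

Definition TP_ideal (mul : V -> V -> V) (br : {ffun 'I_n -> V} -> V) (I : V -> Prop) : Prop :=
  nLie_ideal br I /\ forall a u, I u -> I (mul a u).

Definition trivial_or_full (I : V -> Prop) : Prop :=
  (forall v, I v -> v = 0) \/ (forall v, I v).

Definition nLie_simple (br : {ffun 'I_n -> V} -> V) : Prop :=
  (exists x, br x != 0) /\ forall I, nLie_ideal br I -> trivial_or_full I.

Definition TP_simple (mul : V -> V -> V) (br : {ffun 'I_n -> V} -> V) : Prop :=
  (exists x, br x != 0) /\ forall I, TP_ideal mul br I -> trivial_or_full I.

End TPnLie.

(* Main.v *)
Require Import Defs.
From HB Require Import structures.
From mathcomp Require Import all_boot all_order all_algebra.
From mathcomp Require Import reals complex.
Import GRing.Theory Num.Theory.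
Local Open Scope ring_scope.
Set Implicit Arguments. Unset Strict Implicit.

Lemma updE (K : fieldType) (V : lmodType K) (n : nat) (x : {ffun 'I_n -> V}) i v j :
  upd x i v j = if j == i then v else x j.
Proof. by rewrite /upd ffunE. Qed.

Lemma upd_same (K : fieldType) (V : lmodType K) (n : nat) (x : {ffun 'I_n -> V}) i u v :
  upd (upd x i u) i v = upd x i v.
Proof. by apply/ffunP=> j; rewrite !updE; case: eqP. Qed.

Lemma upd_comm (K : fieldType) (V : lmodType K) (n : nat) (x : {ffun 'I_n -> V}) i j u v :
  i != j -> upd (upd x i u) j v = upd (upd x j v) i u.
Proof.
move=> nij; apply/ffunP=> k; rewrite !updE.
have [->|kj] := eqVneq k j; first by rewrite eq_sym (negbTE nij).
by have [eki|ki] := eqVneq k i.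
Qed.

Lemma upd_neq (K : fieldType) (V : lmodType K) (n : nat) (x : {ffun 'I_n -> V}) i v j :
  j != i -> upd x i v j = x j.
Proof. by move=> nji; rewrite updE (negbTE nji). Qed.

Lemma upd_id (K : fieldType) (V : lmodType K) (n : nat) (x : {ffun 'I_n -> V}) i :
  upd x i (x i) = x.
Proof. by apply/ffunP=> j; rewrite updE; case: eqP => [->|]. Qed.


Lemma sub0 (K : fieldType) (V : lmodType K) (I : V -> Prop) : subspace I -> I 0.
Proof. by case. Qed.
Lemma subD (K : fieldType) (V : lmodType K) (I : V -> Prop) u v :
  subspace I -> I u -> I v -> I (u + v).
Proof. by case=> _ H _; apply: H. Qed.
Lemma subZ (K : fieldType) (V : lmodType K) (I : V -> Prop) (a : K) u :
  subspace I -> I u -> I (a *: u).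
Proof. by case=> _ _ H; apply: H. Qed.
Lemma subN (K : fieldType) (V : lmodType K) (I : V -> Prop) u :
  subspace I -> I u -> I (- u).
Proof. by move=> SI Iu; rewrite -scaleN1r; apply: subZ. Qed.
Lemma subB (K : fieldType) (V : lmodType K) (I : V -> Prop) u v :
  subspace I -> I u -> I v -> I (u - v).
Proof. by move=> SI Iu Iv; apply: subD => //; apply: subN. Qed.
Lemma sub_sum (K : fieldType) (V : lmodType K) (I : V -> Prop) (n : nat) (P : pred 'I_n)
  (F : 'I_n -> V) : subspace I -> (forall i, P i -> I (F i)) -> I (\sum_(i < n | P i) F i).
Proof.
move=> SI H; apply: (big_ind I) => //; first exact: sub0.
by move=> u v; apply: subD.
Qed.
Lemma sub_inv (K : fieldType) (V : lmodType K) (I : V -> Prop) (c : K) u :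
  subspace I -> c != 0 -> I (c *: u) -> I u.
Proof.
move=> SI c0 H; have := subZ c^-1 SI H.
by rewrite scalerA mulVf // scale1r.
Qed.
Lemma eqI_trans (K : fieldType) (V : lmodType K) (I : V -> Prop) x y z :
  subspace I -> I (x - y) -> I (y - z) -> I (x - z).
Proof. by move=> SI H1 H2; have := subD SI H1 H2; rewrite addrA subrK. Qed.
Lemma eqI_sym (K : fieldType) (V : lmodType K) (I : V -> Prop) x y :
  subspace I -> I (x - y) -> I (y - x).
Proof. by move=> SI H; have := subN SI H; rewrite opprB. Qed.
Lemma eqI_Z (K : fieldType) (V : lmodType K) (I : V -> Prop) (c : K) x y :
  subspace I -> I (x - y) -> I (c *: x - c *: y).
Proof. by move=> SI H; rewrite -scalerBr; apply: subZ. Qed.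
Lemma eqI_sum (K : fieldType) (V : lmodType K) (I : V -> Prop) (n : nat)
  (F G : 'I_n -> V) : subspace I -> (forall i, I (F i - G i)) ->
  I (\sum_(i < n) F i - \sum_(i < n) G i).
Proof. by move=> SI H; rewrite -sumrB; apply: sub_sum. Qed.

Lemma br_upd0 (K : fieldType) (V : lmodType K) (n : nat) (br : {ffun 'I_n -> V} -> V) x i :
  multilinear br -> br (upd x i 0) = 0.
Proof.
move=> ML; have h := ML x i 1 0 0; rewrite scale1r addr0 scale1r in h.
by apply: (addrI (br (upd x i 0))); rewrite addr0 -h.
Qed.
Lemma br_updZ (K : fieldType) (V : lmodType K) (n : nat) (br : {ffun 'I_n -> V} -> V) x i a u :
  multilinear br -> br (upd x i (a *: u)) = a *: br (upd x i u).
Proof. by move=> ML; have := ML x i a u 0; rewrite addr0 br_upd0 // addr0. Qed.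
Lemma br_updD (K : fieldType) (V : lmodType K) (n : nat) (br : {ffun 'I_n -> V} -> V) x i u v :
  multilinear br -> br (upd x i (u + v)) = br (upd x i u) + br (upd x i v).
Proof. by move=> ML; have := ML x i 1 u v; rewrite !scale1r. Qed.
Lemma br_updB (K : fieldType) (V : lmodType K) (n : nat) (br : {ffun 'I_n -> V} -> V) x i u v :
  multilinear br -> br (upd x i (u - v)) = br (upd x i u) - br (upd x i v).
Proof. by move=> ML; rewrite br_updD // -scaleN1r br_updZ // scaleN1r. Qed.

Lemma mul0 (K : fieldType) (V : lmodType K) (mul : V -> V -> V) h :
  is_comm_assoc mul -> mul h 0 = 0.
Proof.
case=> lin comm _; rewrite comm; have hh := lin 1 0 0 h.
rewrite scale1r addr0 scale1r in hh.
by apply: (addrI (mul 0 h)); rewrite addr0 -hh.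
Qed.
Lemma mulD (K : fieldType) (V : lmodType K) (mul : V -> V -> V) h u v :
  is_comm_assoc mul -> mul h (u + v) = mul h u + mul h v.
Proof. by case=> lin comm _; rewrite !(comm h); have := lin 1 u v h; rewrite !scale1r. Qed.
Lemma mulZ (K : fieldType) (V : lmodType K) (mul : V -> V -> V) h a u :
  is_comm_assoc mul -> mul h (a *: u) = a *: mul h u.
Proof.
move=> CA; have CA' := CA; case: CA' => lin comm _; rewrite !(comm h).
by have := lin a u 0 h; rewrite addr0 -(comm h 0) mul0 // addr0.
Qed.
Lemma mul_sum (K : fieldType) (V : lmodType K) (mul : V -> V -> V) h (n : nat) (F : 'I_n -> V) :
  is_comm_assoc mul -> mul h (\sum_(i < n) F i) = \sum_(i < n) mul h (F i).
Proof.
move=> CA; apply: (big_morph (mul h)); last exact: mul0.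
by move=> u v; apply: mulD.
Qed.

Lemma ideal_slot (K : fieldType) (V : lmodType K) (n : nat) (br : {ffun 'I_n -> V} -> V)
  (I : V -> Prop) (k0 : 'I_n) (x : {ffun 'I_n -> V}) (j : 'I_n) :
  skew_symmetric br -> val k0 = 0%N -> nLie_ideal br I -> I (x j) -> I (br x).
Proof.
move=> SK hk0 [SI idl] Ixj.
have [e|njk] := eqVneq k0 j; first by rewrite -e in Ixj; exact: (idl x k0 hk0).
have e : swp x k0 j k0 = x j by rewrite /swp ffunE eqxx.
have := idl (swp x k0 j) k0 hk0; rewrite e SK // => /(_ Ixj) /(subN SI).
by rewrite opprK.
Qed.

Lemma tp_slot (K : fieldType) (V : lmodType K) (n : nat) (mul : V -> V -> V)
  (br : {ffun 'I_n -> V} -> V) (I : V -> Prop) (k0 : 'I_n) (h : V) (a : {ffun 'I_n -> V}) (j : 'I_n) :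
  is_TP_nLie mul br -> val k0 = 0%N -> nLie_ideal br I -> I (a j) ->
  I (n%:R *: mul h (br a) - br (upd a j (mul h (a j)))).
Proof.
case=> _ [_ SK _] TPI hk0 Id Iaj.
rewrite TPI (bigD1 j) //= addrAC subrr add0r.
apply: sub_sum; first by case: Id.
move=> i nij; apply: (ideal_slot (j := j) SK hk0 Id).
by rewrite updE eq_sym (negbTE nij).
Qed.

Lemma tp_all (K : numFieldType) (V : lmodType K) (n : nat) (mul : V -> V -> V)
  (br : {ffun 'I_n -> V} -> V) (I : V -> Prop) (h : V) (a : {ffun 'I_n -> V}) :
  (0 < n)%N -> is_TP_nLie mul br -> subspace I ->
  (forall i, I (br (upd a i (mul h (a i))))) -> I (mul h (br a)).
Proof.
move=> hn0 [_ _ TPI] SI H.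
apply: (sub_inv (c := n%:R) SI); first by rewrite pnatr_eq0 -lt0n.
by rewrite TPI; apply: sub_sum.
Qed.

Lemma key (K : numFieldType) (V : lmodType K) (n : nat) (mul : V -> V -> V)
  (br : {ffun 'I_n -> V} -> V) (I : V -> Prop) (k0 k1 : 'I_n) (u : V)
  (y b : {ffun 'I_n -> V}) (h : V) :
  (2 <= n)%N -> is_TP_nLie mul br -> nLie_ideal br I -> val k0 = 0%N -> val k1 = 1%N ->
  I u -> I (mul h (br (upd (upd y k1 u) k0 (br b)))).
Proof.
move=> hn TP Id hk0 hk1 Iu.
have TP' := TP; case: TP' => CA [ML SK FIL] TPI.
have SI : subspace I by case: Id.
have k01 : k0 != k1 by apply/eqP => e; have := congr1 val e; rewrite hk0 hk1.
set y' := upd y k1 u.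
set z := upd y' k0 (br b).
have zk1 : z k1 = u by rewrite /z updE eq_sym (negbTE k01) /y' updE eqxx.
have Izk1 : I (z k1) by rewrite zk1.
have s1 := tp_slot h TP hk0 Id Izk1.
rewrite zk1 in s1.
have e2 : br (upd z k1 (mul h u)) =
  \sum_(i < n) br (upd b i (br (upd (upd y' k1 (mul h u)) k0 (b i)))).
  by rewrite /z upd_comm // (FIL b _ k0 hk0).
have e3 : br z = \sum_(i < n) br (upd b i (br (upd y' k0 (b i)))).
  by rewrite /z (FIL b y' k0 hk0).
have s3 : forall i, I (br (upd b i (br (upd (upd y' k1 (mul h u)) k0 (b i))))
    - n%:R *: (n%:R *: mul h (br (upd b i (br (upd y' k0 (b i))))))).
  move=> i; set w := br (upd y' k0 (b i)).
  have zi1 : upd y' k0 (b i) k1 = u by rewrite updE eq_sym (negbTE k01) /y' updE eqxx.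
  have Iw : I w by apply: (ideal_slot (j := k1) SK hk0 Id); rewrite zi1.
  have Izi1 : I (upd y' k0 (b i) k1) by rewrite zi1.
  have t1 := tp_slot h TP hk0 Id Izi1.
  rewrite zi1 upd_comm // in t1.
  have t2 : I (br (upd b i (br (upd (upd y' k1 (mul h u)) k0 (b i))))
              - br (upd b i (n%:R *: mul h w))).
    rewrite -br_updB //; apply: (ideal_slot (j := i) SK hk0 Id).
    by rewrite updE eqxx; apply: eqI_sym t1.
  have Ibi : I (upd b i w i) by rewrite updE eqxx.
  have t3 := tp_slot h TP hk0 Id Ibi.
  rewrite updE eqxx upd_same in t3.
  rewrite br_updZ // in t2.
  apply: (eqI_trans SI t2); apply: (eqI_Z _ SI); exact: (eqI_sym SI t3).
have s4 : I (br (upd z k1 (mul h u)) - n%:R *: (n%:R *: mul h (br z))).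
  by rewrite e2 e3 mul_sum // !scaler_sumr; apply: (eqI_sum SI s3).
have s5 := eqI_sym SI (eqI_trans SI s1 s4).
have c0 : (n%:R * n%:R - n%:R : K) != 0.
  rewrite -natrM -natrB; last by rewrite leq_pmulr // (leq_trans _ hn).
  by rewrite pnatr_eq0 subn_eq0 -ltnNge ltn_Pmull // (leq_trans _ hn).
apply: (sub_inv (c := n%:R * n%:R - n%:R) SI c0).
by rewrite scalerBl -scalerA.
Qed.

Lemma span_all (K : numFieldType) (V : lmodType K) (n : nat) (mul : V -> V -> V)
  (br : {ffun 'I_n -> V} -> V) :
  (0 < n)%N -> is_TP_nLie mul br -> TP_simple mul br ->
  forall P : V -> Prop, subspace P -> (forall b, P (br b)) -> forall v, P v.
Proof.
move=> hn0 TP [[x0 nz] simp] P SP HP v.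
have CA : is_comm_assoc mul by case: TP.
pose Sp := fun w => forall Q : V -> Prop, subspace Q -> (forall b, Q (br b)) -> Q w.
have SS : subspace Sp.
  split.
  - by move=> Q SQ HQ; exact: (sub0 SQ).
  - by move=> u w Su Sw Q SQ HQ; exact: (subD SQ (Su Q SQ HQ) (Sw Q SQ HQ)).
  - by move=> a u Su Q SQ HQ; exact: (subZ a SQ (Su Q SQ HQ)).
have Sbr : forall b, Sp (br b) by move=> b Q _ HQ.
have TS : TP_ideal mul br Sp.
  split; first split; first exact: SS.
  - by move=> x k hk Sxk; apply: Sbr.
  move=> a w Sw; apply: (Sw (fun w => Sp (mul a w))).
  - split.
    + by rewrite mul0 //; exact: (sub0 SS).
    + by move=> u1 u2 H1 H2; rewrite mulD //; exact: (subD SS H1 H2).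
    + by move=> c u1 H1; rewrite mulZ //; exact: (subZ c SS H1).
  - by move=> b; apply: (tp_all hn0 TP SS) => i; apply: Sbr.
case: (simp Sp TS) => [S0|Sfull].
  by rewrite (S0 _ (Sbr x0)) eqxx in nz.
exact: (Sfull v P SP HP).
Qed.

Lemma simple_nLie (K : numFieldType) (V : lmodType K) (n : nat) (mul : V -> V -> V)
  (br : {ffun 'I_n -> V} -> V) :
  (2 <= n)%N -> is_TP_nLie mul br -> TP_simple mul br -> nLie_simple br.
Proof.
move=> hn TP TS; have TS' := TS; case: TS' => [[x0 nz] simp]; split; first by exists x0.
have TP' := TP; case: TP' => CA [ML SK FIL] TPI.
have hn0 : (0 < n)%N by apply: leq_trans hn.
pose k0 : 'I_n := Ordinal hn0. pose k1 : 'I_n := Ordinal hn.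
have hk0 : val k0 = 0%N by [].
have hk1 : val k1 = 1%N by [].
have k01 : k0 != k1 by apply/eqP => e; have := congr1 val e; rewrite hk0 hk1.
have kk : forall k : 'I_n, val k = 0%N -> k = k0 by move=> k hk; apply/val_inj; rewrite /= hk.
move=> I Id; have SI : subspace I by case: Id.
have Pall : forall u, I u -> forall v y h, I (mul h (br (upd (upd y k1 u) k0 v))).
  move=> u Iu v.
  pose P := fun v => forall y h, I (mul h (br (upd (upd y k1 u) k0 v))).
  suff : P v by [].
  apply: (span_all (P := P) hn0 TP TS).
  - split.
    + by move=> y h; rewrite br_upd0 // mul0 //; apply: sub0.
    + move=> v1 v2 H1 H2 y h; rewrite br_updD // mulD //; exact: (subD SI (H1 y h) (H2 y h)).
    + move=> a v1 H1 y h; rewrite br_updZ // mulZ //; exact: (subZ a SI (H1 y h)).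
  - by move=> b y h; exact: (key y b h hn TP Id hk0 hk1 Iu).
pose M := fun w => I w /\ forall h, I (mul h w).
have TM : TP_ideal mul br M.
  split; first split; first split.
  - split; [exact: sub0 | move=> h; rewrite mul0 //; exact: sub0].
  - move=> u v [Iu Mu] [Iv Mv]; split; [exact: subD | move=> h; rewrite mulD //; exact: subD].
  - move=> a u [Iu Mu]; split; [exact: subZ | move=> h; rewrite mulZ //; exact: subZ].
  - move=> x k hk [Ixk Mxk]; split; first by case: Id => _ H; apply: H hk Ixk.
    move=> h; apply: (tp_all hn0 TP SI) => i.
    have [eik|nik] := eqVneq i k.
      apply: (ideal_slot (j := k) SK hk0 Id); rewrite updE eik eqxx; exact: Mxk.
    by apply: (ideal_slot (j := k) SK hk0 Id); rewrite updE eq_sym (negbTE nik).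
  - move=> a w [Iw Mw]; split; first exact: Mw.
    by move=> h; case: CA => _ _ assoc; rewrite assoc; exact: Mw.
case: (simp M TM) => [M0|Mfull]; last first.
  by right => v; case: (Mfull v).
left => u Iu.
have brz : forall x : {ffun 'I_n -> V}, I (x k1) -> br x = 0.
  move=> x Ix; apply: M0; split; first exact: (ideal_slot SK hk0 Id Ix).
  by move=> h; have := Pall _ Ix (x k0) x h; rewrite !upd_id.
pose Z := fun w => forall y, br (upd y k0 w) = 0.
have Zslot : forall w (x : {ffun 'I_n -> V}), Z w -> x k0 = w -> br x = 0.
  by move=> w x Zw e; rewrite -(upd_id x k0) e; apply: Zw.
have Zu : Z u.
  move=> y; apply: oppr_inj; rewrite oppr0 -(SK _ _ _ k01); apply: brz.
  by rewrite /swp ffunE (eq_sym k1 k0) (negbTE k01) eqxx updE eqxx.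
have TZ : TP_ideal mul br Z.
  split; first split; first split.
  - by move=> y; rewrite br_upd0.
  - by move=> v w Zv Zw y; rewrite br_updD // Zv Zw addr0.
  - by move=> a v Zv y; rewrite br_updZ // Zv scaler0.
  - move=> x k hk Zxk y; rewrite (kk k hk) in Zxk.
    rewrite (FIL x y k0 hk0); apply: big1 => i _.
    have [->|nik] := eqVneq i k0; first by rewrite Zxk br_upd0.
    by apply: (Zslot (x k0)) => //; rewrite updE eq_sym (negbTE nik).
  - move=> a w Zw y.
    have := TPI a (upd y k0 w).
    rewrite Zw mul0 // scaler0 (bigD1 k0) //= updE eqxx upd_same.
    rewrite big1 ?addr0 => [e|i nik]; first by rewrite -e.
    apply: (Zslot w) => //; have nik' : k0 != i by rewrite eq_sym.
    by rewrite (upd_neq _ _ nik') updE eqxx.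
case: (simp Z TZ) => [Z0|Zfull]; first exact: Z0.
exfalso; move: nz; by rewrite (Zslot (x0 k0) x0 (Zfull _) erefl) eqxx.
Qed.

Lemma nLie_TP (K : fieldType) (V : lmodType K) (n : nat) (mul : V -> V -> V)
  (br : {ffun 'I_n -> V} -> V) : nLie_simple br -> TP_simple mul br.
Proof. by case=> nz simp; split => // I [Id _]; apply: simp. Qed.

Unset Implicit Arguments.
Local Open Scope complex_scope.

Theorem mainTheorem7 (R : realType) (V : lmodType R[i]) (n : nat) (hn : (2 <= n)%N)
    (mul : V -> V -> V) (br : {ffun 'I_n -> V} -> V) :
  is_TP_nLie mul br -> (TP_simple mul br <-> nLie_simple br).
Proof.
move=> TP; split; [exact: simple_nLie | exact: nLie_TP].
Qed.
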